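(* For every bunched context $\Delta(-)$ and formulas $\varphi,\psi,\chi$: (i) if $\Delta(\varphi\wedge\psi)\vdash_{\mathsf{cf}}\chi$ then $\Delta(\varphi\mathbin{;}\psi)\vdash_{\mathsf{cf}}\chi$; (ii) if $\Delta(\varphi\ast\psi)\vdash_{\mathsf{cf}}\chi$ then $\Delta(\varphi\mathbin{,}\psi)\vdash_{\mathsf{cf}}\chi$; (iii) if $\Delta(\top)\vdash_{\mathsf{cf}}\chi$ then $\Delta(\varnothing_a)\vdash_{\mathsf{cf}}\chi$; (iv) if $\Delta(\mathsf{emp})\vdash_{\mathsf{cf}}\chi$ then $\Delta(\varnothing_m)\vdash_{\mathsf{cf}}\chi$.
   Context: Formulas of BI: $\varphi,\psi ::= \top \mid \bot \mid \varphi\wedge\psi \mid \varphi\vee\psi \mid \varphi\to\psi \mid \mathsf{emp} \mid \varphi\ast\psi \mid \varphi -\!\!\ast\, \psi \mid a$, $a\in\mathrm{Atom}$. Bunches are finite binary trees whose leaves are formulas or empty bunches $\varnothing_m,\varnothing_a$ and whose internal nodes are labelled by the multiplicative comma ($\Delta_1\mathbin{,}\Delta_2$) or the additive semicolon ($\Delta_1\mathbin{;}\Delta_2$). A bunched context $\Delta(-)$ is a bunch with one leaf replaced by a hole; $\Delta(\Gamma)$ fills it with $\Gamma$. Bunch equivalence $\equiv$ is the least equivalence relation making $\mathbin{,}$ commutative, associative with unit $\varnothing_m$, $\mathbin{;}$ commutative, associative with unit $\varnothing_a$, and closed under contexts. The cut-free BI sequent calculus ($\Delta\vdash_{\mathsf{cf}}\varphi$)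 has the rules: (ax) $a\vdash a$ for atoms $a$; (equiv) from $\Delta'\vdash\varphi$, $\Delta\equiv\Delta'$ infer $\Delta\vdash\varphi$; (W;) from $\Delta(\Delta_1)\vdash\varphi$ infer $\Delta(\Delta_1\mathbin{;}\Delta_2)\vdash\varphi$; (C;) from $\Delta(\Delta_1\mathbin{;}\Delta_1)\vdash\varphi$ infer $\Delta(\Delta_1)\vdash\varphi$; (empR) $\varnothing_m\vdash\mathsf{emp}$; (empL) from $\Delta(\varnothing_m)\vdash\varphi$ infer $\Delta(\mathsf{emp})\vdash\varphi$; ($\ast$R) from $\Delta_1\vdash\varphi$, $\Delta_2\vdash\psi$ infer $\Delta_1\mathbin{,}\Delta_2\vdash\varphi\ast\psi$; ($\ast$L) from $\Delta(\varphi\mathbin{,}\psi)\vdash\chi$ infer $\Delta(\varphi\ast\psi)\vdash\chi$; ($-\!\ast$R) from $\Delta\mathbin{,}\varphi\vdash\psi$ infer $\Delta\vdash\varphi-\!\!\ast\,\psi$; ($-\!\ast$L) from $\Delta_1\vdash\varphi$, $\Delta(\Delta_2\mathbin{,}\psi)\vdash\chi$ infer $\Delta((\Delta_1\mathbin{,}\Delta_2)\mathbin{,}(\varphi-\!\!\ast\,\psi))\vdash\chi$; ($\top$R) $\varnothing_a\vdash\top$; ($\top$L) from $\Delta(\varnothing_a)\vdash\varphi$ infer $\Delta(\top)\vdash\varphi$; ($\wedge$R) from $\Delta_1\vdash\varphi$, $\Delta_2\vdash\psi$ infer $\Delta_1\mathbin{;}\Delta_2\vdash\varphi\wedge\psi$;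 ($\wedge$L) from $\Delta(\varphi\mathbin{;}\psi)\vdash\chi$ infer $\Delta(\varphi\wedge\psi)\vdash\chi$; ($\to$R) from $\Delta\mathbin{;}\varphi\vdash\psi$ infer $\Delta\vdash\varphi\to\psi$; ($\to$L) from $\Delta_1\vdash\varphi$, $\Delta(\Delta_2\mathbin{;}\psi)\vdash\chi$ infer $\Delta((\Delta_1\mathbin{;}\Delta_2)\mathbin{;}(\varphi\to\psi))\vdash\chi$; ($\bot$L) $\Delta(\bot)\vdash\varphi$; ($\vee$R1/2) from $\Delta\vdash\varphi$ (resp. $\Delta\vdash\psi$) infer $\Delta\vdash\varphi\vee\psi$; ($\vee$L) from $\Delta(\varphi)\vdash\chi$, $\Delta(\psi)\vdash\chi$ infer $\Delta(\varphi\vee\psi)\vdash\chi$. (No cut rule.) *)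

(* Defs.v *)
Inductive formula : Type :=
| FTop | FBot
| FAnd : formula -> formula -> formula
| FOr : formula -> formula -> formula
| FImp : formula -> formula -> formula
| FEmp
| FStar : formula -> formula -> formula
| FWand : formula -> formula -> formula
| FAtom : nat -> formula.

Inductive bunch : Type :=
| BForm : formula -> bunch
| BEmpM : bunch
| BEmpA : bunch
| BComma : bunch -> bunch -> bunch
| BSemi : bunch -> bunch -> bunch.

Inductive ctx : Type :=
| CHole : ctx
| CCommaL : ctx -> bunch -> ctx
| CCommaR : bunch -> ctx -> ctx
| CSemiL : ctx -> bunch -> ctx
| CSemiR : bunch -> ctx -> ctx.

Fixpoint fill (D : ctx) (G : bunch) : bunch :=
  match D with
  | CHole => G
  | CCommaL D' B => BComma (fill D' G) B
  | CCommaR B D' => BComma B (fill D' G)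
  | CSemiL D' B => BSemi (fill D' G) B
  | CSemiR B D' => BSemi B (fill D' G)
  end.

Inductive beq : bunch -> bunch -> Prop :=
| beq_refl : forall A, beq A A
| beq_sym : forall A B, beq A B -> beq B A
| beq_trans : forall A B C, beq A B -> beq B C -> beq A C
| beq_comma_comm : forall A B, beq (BComma A B) (BComma B A)
| beq_comma_assoc : forall A B C,
    beq (BComma A (BComma B C)) (BComma (BComma A B) C)
| beq_comma_unit : forall A, beq (BComma A BEmpM) A
| beq_semi_comm : forall A B, beq (BSemi A B) (BSemi B A)
| beq_semi_assoc : forall A B C,
    beq (BSemi A (BSemi B C)) (BSemi (BSemi A B) C)
| beq_semi_unit : forall A, beq (BSemi A BEmpA) A
| beq_ctx : forall (D : ctx) A B, beq A B -> beq (fill D A) (fill D B).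

Inductive cf : bunch -> formula -> Prop :=
| cf_ax : forall a, cf (BForm (FAtom a)) (FAtom a)
| cf_equiv : forall D D' p, cf D' p -> beq D D' -> cf D p
| cf_WSemi : forall (D : ctx) D1 D2 p,
    cf (fill D D1) p -> cf (fill D (BSemi D1 D2)) p
| cf_CSemi : forall (D : ctx) D1 p,
    cf (fill D (BSemi D1 D1)) p -> cf (fill D D1) p
| cf_empR : cf BEmpM FEmp
| cf_empL : forall (D : ctx) p,
    cf (fill D BEmpM) p -> cf (fill D (BForm FEmp)) p
| cf_starR : forall D1 D2 p q,
    cf D1 p -> cf D2 q -> cf (BComma D1 D2) (FStar p q)
| cf_starL : forall (D : ctx) p q r,
    cf (fill D (BComma (BForm p) (BForm q))) r ->
    cf (fill D (BForm (FStar p q))) r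
| cf_wandR : forall D p q,
    cf (BComma D (BForm p)) q -> cf D (FWand p q)
| cf_wandL : forall (D : ctx) D1 D2 p q r,
    cf D1 p -> cf (fill D (BComma D2 (BForm q))) r ->
    cf (fill D (BComma (BComma D1 D2) (BForm (FWand p q)))) r
| cf_topR : cf BEmpA FTop
| cf_topL : forall (D : ctx) p,
    cf (fill D BEmpA) p -> cf (fill D (BForm FTop)) p
| cf_andR : forall D1 D2 p q,
    cf D1 p -> cf D2 q -> cf (BSemi D1 D2) (FAnd p q)
| cf_andL : forall (D : ctx) p q r,
    cf (fill D (BSemi (BForm p) (BForm q))) r ->
    cf (fill D (BForm (FAnd p q))) r
| cf_impR : forall D p q,
    cf (BSemi D (BForm p)) q -> cf D (FImp p q)
| cf_impL : forall (D : ctx) D1 D2 p q r,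
    cf D1 p -> cf (fill D (BSemi D2 (BForm q))) r ->
    cf (fill D (BSemi (BSemi D1 D2) (BForm (FImp p q)))) r
| cf_botL : forall (D : ctx) p, cf (fill D (BForm FBot)) p
| cf_orR1 : forall D p q, cf D p -> cf D (FOr p q)
| cf_orR2 : forall D p q, cf D q -> cf D (FOr p q)
| cf_orL : forall (D : ctx) p q r,
    cf (fill D (BForm p)) r -> cf (fill D (BForm q)) r ->
    cf (fill D (BForm (FOr p q))) r.

(* Main.v *)
Require Import Defs.

Inductive good : formula -> bunch -> Prop :=
| g_top : good FTop BEmpA
| g_emp : good FEmp BEmpM
| g_and : forall p q, good (FAnd p q) (BSemi (BForm p) (BForm q))
| g_star : forall p q, good (FStar p q) (BComma (BForm p) (BForm q)).

Inductive R (a : formula) (b : bunch) : bunch -> bunch -> Prop :=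
| r_form : forall f, R a b (BForm f) (BForm f)
| r_m : R a b BEmpM BEmpM
| r_a : R a b BEmpA BEmpA
| r_sub : R a b (BForm a) b
| r_comma : forall A B A' B', R a b A A' -> R a b B B' -> R a b (BComma A B) (BComma A' B')
| r_semi : forall A B A' B', R a b A A' -> R a b B B' -> R a b (BSemi A B) (BSemi A' B').

Inductive Rc (a : formula) (b : bunch) : ctx -> ctx -> Prop :=
| rc_hole : Rc a b CHole CHole
| rc_cl : forall D D' B B', Rc a b D D' -> R a b B B' -> Rc a b (CCommaL D B) (CCommaL D' B')
| rc_cr : forall D D' B B', Rc a b D D' -> R a b B B' -> Rc a b (CCommaR B D) (CCommaR B' D')
| rc_sl : forall D D' B B', Rc a b D D' -> R a b B B' -> Rc a b (CSemiL D B) (CSemiL D' B')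
| rc_sr : forall D D' B B', Rc a b D D' -> R a b B B' -> Rc a b (CSemiR B D) (CSemiR B' D').

Global Hint Constructors R Rc : core.

Lemma R_refl a b X : R a b X X.
Proof. induction X; auto. Qed.

Lemma Rc_refl a b D : Rc a b D D.
Proof. induction D; auto using R_refl. Qed.

Lemma R_fill a b D D' X Z : Rc a b D D' -> R a b X Z -> R a b (fill D X) (fill D' Z).
Proof. induction 1; simpl; auto. Qed.

Lemma R_decomp a b D X Y : R a b (fill D X) Y ->
  exists D' Z, Y = fill D' Z /\ Rc a b D D' /\ R a b X Z.
Proof.
  revert Y; induction D; simpl; intros Y H.
  - exists CHole, Y; auto.
  - inversion H; subst. destruct (IHD _ H2) as (D' & Z & -> & ? & ?).
    exists (CCommaL D' B'), Z; simpl; auto.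
  - inversion H; subst. destruct (IHD _ H4) as (D' & Z & -> & ? & ?).
    exists (CCommaR A' D'), Z; simpl; auto.
  - inversion H; subst. destruct (IHD _ H2) as (D' & Z & -> & ? & ?).
    exists (CSemiL D' B'), Z; simpl; auto.
  - inversion H; subst. destruct (IHD _ H4) as (D' & Z & -> & ? & ?).
    exists (CSemiR A' D'), Z; simpl; auto.
Qed.

Lemma R_sim a b A B : beq A B ->
  (forall Y, R a b A Y -> exists Y', R a b B Y' /\ beq Y Y') /\
  (forall Y', R a b B Y' -> exists Y, R a b A Y /\ beq Y Y').
Proof.
  induction 1.
  - split; intros; eexists; split; eauto; apply beq_refl.
  - destruct IHbeq as [H1 H2]; split; intros Y HY.
    + destruct (H2 _ HY) as (Y' & ? & ?); eauto using beq_sym.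
    + destruct (H1 _ HY) as (Y' & ? & ?); eauto using beq_sym.
  - destruct IHbeq1 as [H1 H2], IHbeq2 as [H3 H4]; split; intros Y HY.
    + destruct (H1 _ HY) as (Y1 & ? & ?). destruct (H3 _ H5) as (Y2 & ? & ?).
      eauto using beq_trans.
    + destruct (H4 _ HY) as (Y1 & ? & ?). destruct (H2 _ H5) as (Y2 & ? & ?).
      eauto using beq_trans.
  - split; intros Y HY; inversion HY; subst; eexists; split; eauto; apply beq_comma_comm.
  - split; intros Y HY; inversion HY; subst.
    + match goal with H : R _ _ (BComma _ _) _ |- _ => inversion H; subst end.
      eexists; split; eauto; apply beq_comma_assoc.
    + match goal with H : R _ _ (BComma _ _) _ |- _ => inversion H; subst end.
      eexists; split; eauto; apply beq_comma_assoc.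
  - split; intros Y HY.
    + inversion HY; subst. match goal with H : R _ _ BEmpM _ |- _ => inversion H; subst end.
      eexists; split; eauto; apply beq_comma_unit.
    + exists (BComma Y BEmpM); split; auto; apply beq_comma_unit.
  - split; intros Y HY; inversion HY; subst; eexists; split; eauto; apply beq_semi_comm.
  - split; intros Y HY; inversion HY; subst.
    + match goal with H : R _ _ (BSemi _ _) _ |- _ => inversion H; subst end.
      eexists; split; eauto; apply beq_semi_assoc.
    + match goal with H : R _ _ (BSemi _ _) _ |- _ => inversion H; subst end.
      eexists; split; eauto; apply beq_semi_assoc.
  - split; intros Y HY.
    + inversion HY; subst. match goal with H : R _ _ BEmpA _ |- _ => inversion H; subst end.
      eexists; split; eauto; apply beq_semi_unit.
    + exists (BSemi Y BEmpA); split; auto; apply beq_semi_unit.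
  - destruct IHbeq as [H1 H2]; split; intros Y HY.
    + destruct (R_decomp _ _ _ _ _ HY) as (D' & Z & -> & HD & HZ).
      destruct (H1 _ HZ) as (Z' & ? & ?).
      exists (fill D' Z'); split; [apply R_fill; auto | apply beq_ctx; auto].
    + destruct (R_decomp _ _ _ _ _ HY) as (D' & Z & -> & HD & HZ).
      destruct (H2 _ HZ) as (Z' & ? & ?).
      exists (fill D' Z'); split; [apply R_fill; auto | apply beq_ctx; auto].
Qed.

Ltac dec H := destruct (R_decomp _ _ _ _ _ H) as (D' & Z & -> & HD & HZ).

Lemma main a b : good a b -> forall X r, cf X r -> forall Y, R a b X Y -> cf Y r.
Proof.
  intros Hg X r H; induction H; intros Y HY.
  - inversion HY; subst; [constructor | inversion Hg].
  - destruct (R_sim a b _ _ H0) as [H1 _]. destruct (H1 _ HY) as (Y' & ? & ?).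
    eapply cf_equiv; [apply IHcf; eassumption | eassumption].
  - dec HY. inversion HZ; subst. apply cf_WSemi. apply IHcf. apply R_fill; auto.
  - dec HY. apply cf_CSemi. apply IHcf. apply R_fill; auto.
  - inversion HY; subst; constructor.
  - dec HY. inversion HZ; subst.
    + apply cf_empL. apply IHcf. apply R_fill; auto.
    + inversion Hg; subst. apply IHcf. apply R_fill; auto.
  - inversion HY; subst; constructor; auto.
  - dec HY. inversion HZ; subst.
    + apply cf_starL. apply IHcf. apply R_fill; auto using R_refl.
    + inversion Hg; subst. apply IHcf. apply R_fill; auto using R_refl.
  - constructor. apply IHcf. auto using R_refl.
  - dec HY. inversion HZ; subst.
    match goal with H : R _ _ (BComma _ _) _ |- _ => inversion H; subst end.
    match goal with H : R _ _ (BForm (FWand _ _)) _ |- _ => inversion H; subst end.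
    + apply cf_wandL; auto. apply IHcf2. apply R_fill; auto using R_refl.
    + inversion Hg.
  - inversion HY; subst; constructor.
  - dec HY. inversion HZ; subst.
    + apply cf_topL. apply IHcf. apply R_fill; auto.
    + inversion Hg; subst. apply IHcf. apply R_fill; auto.
  - inversion HY; subst; constructor; auto.
  - dec HY. inversion HZ; subst.
    + apply cf_andL. apply IHcf. apply R_fill; auto using R_refl.
    + inversion Hg; subst. apply IHcf. apply R_fill; auto using R_refl.
  - constructor. apply IHcf. auto using R_refl.
  - dec HY. inversion HZ; subst.
    match goal with H : R _ _ (BSemi _ _) _ |- _ => inversion H; subst end.
    match goal with H : R _ _ (BForm (FImp _ _)) _ |- _ => inversion H; subst end.
    + apply cf_impL; auto. apply IHcf2. apply R_fill; auto using R_refl.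
    + inversion Hg.
  - dec HY. inversion HZ; subst; [apply cf_botL | inversion Hg].
  - apply cf_orR1; auto.
  - apply cf_orR2; auto.
  - dec HY. inversion HZ; subst; [|inversion Hg].
    apply cf_orL; [apply IHcf1 | apply IHcf2]; apply R_fill; auto using R_refl.
Qed.

Lemma use a b D r : good a b -> cf (fill D (BForm a)) r -> cf (fill D b) r.
Proof.
  intros Hg H. eapply main; eauto. apply R_fill; auto using Rc_refl.
Qed.

Theorem lemma3p4 : forall (D : ctx) (p q r : formula),
  (cf (fill D (BForm (FAnd p q))) r -> cf (fill D (BSemi (BForm p) (BForm q))) r) /\
  (cf (fill D (BForm (FStar p q))) r -> cf (fill D (BComma (BForm p) (BForm q))) r) /\
  (cf (fill D (BForm FTop)) r -> cf (fill D BEmpA) r) /\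
  (cf (fill D (BForm FEmp)) r -> cf (fill D BEmpM) r).
Proof.
  intros; repeat split; apply use; constructor.
Qed.
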